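(* Let $s\ge 3$ and let $\kappa_s$ be the partition with $\beta(\kappa_s)=T_s$. Then $\kappa_s$ is an $(s,s+1,s+2)$-core partition of maximum size. If $s$ is even, $\kappa_s$ is the unique $(s,s+1,s+2)$-core partition of maximum size, and it is self-conjugate. If $s$ is odd, then $\kappa_s\ne\kappa_s'$ and $\kappa_s,\kappa_s'$ are exactly the two $(s,s+1,s+2)$-core partitions of maximum size, where $\kappa_s'$ denotes the conjugate partition.
   Context: An $(s,s+1,s+2)$-core is a partition with no hook length divisible by $s$, $s+1$ or $s+2$. The $\beta$-set $\beta(\lambda)$ is the set of hook lengths of the first-column boxes of $\lambda$; a partition is determined by its $\beta$-set. $T_s$ is the set of positive integers not expressible as $k_1s+k_2(s+1)+k_3(s+2)$ with $k_1,k_2,k_3$ nonnegative integers. *)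

(* Defs.v *)
(* Integer partitions as weakly decreasing sequences of
   positive naturals (parts listed largest first). *)
From mathcomp Require Import all_boot.
Set Implicit Arguments. Unset Strict Implicit. Unset Printing Implicit Defensive.

Definition is_partition (la : seq nat) : bool :=
  sorted geq la && all (fun x => 0 < x) la.

Definition psize (la : seq nat) : nat := sumn la.

(* lambda'_j : length of column j (0-indexed) *)
Definition col_len (la : seq nat) (j : nat) : nat := count (fun x => j < x) la.

Definition conj_part (la : seq nat) : seq nat :=
  mkseq (col_len la) (head 0 la).

(* hook length of the box in row i, column j (0-indexed), j < lambda_i *)
Definition hook (la : seq nat) (i j : nat) : nat :=
  (nth 0 la i - j) + (col_len la j - i) - 1.

Definition hooks (la : seq nat) : seq nat :=
  [seq hook la i j | i <- iota 0 (size la), j <- iota 0 (nth 0 la i)].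

Definition beta (la : seq nat) : seq nat :=
  [seq hook la i 0 | i <- iota 0 (size la)].

Definition is_core3 (s : nat) (la : seq nat) : bool :=
  is_partition la &&
  all (fun h => ~~ (s %| h) && ~~ (s.+1 %| h) && ~~ (s.+2 %| h)) (hooks la).

Definition in_T (s n : nat) : Prop :=
  0 < n /\ ~ (exists k1 k2 k3 : nat, n = k1 * s + k2 * s.+1 + k3 * s.+2).

(* Main.v *)
Require Import Defs.
From mathcomp Require Import all_boot.
From mathcomp Require Import zify.
From Stdlib Require Import Lia.

Set Implicit Arguments. Unset Strict Implicit. Unset Printing Implicit Defensive.


Definition Mlev (s : nat) := (s - 2) %/ 2.
Definition Llev (s m : nat) := s - 2 * m - 1.
Definition Tseq (s : nat) : seq nat :=
  flatten [seq [seq m * (s + 2) + j | j <- iota 1 (Llev s m)] | m <- iota 0 (Mlev s).+1].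

Lemma mem_Tseq s x : x \in Tseq s <->
  exists m j, [/\ m <= Mlev s, 1 <= j, j <= Llev s m & x = m * (s + 2) + j].
Proof.
split.
- move/flattenP=> [t /mapP [m hm ->] /mapP [j hj ->]].
  rewrite mem_iota in hm; rewrite mem_iota in hj.
  exists m, j; split; lia.
- move=> [m [j [h1 h2 h3 ->]]].
  apply/flattenP; exists [seq m * (s + 2) + j0 | j0 <- iota 1 (Llev s m)].
  + apply/mapP; exists m => //; rewrite mem_iota; lia.
  + apply/mapP; exists j => //; rewrite mem_iota; lia.
Qed.

Lemma in_T_Tseq s x : 3 <= s -> (in_T s x <-> x \in Tseq s).
Proof.
move=> hs; rewrite mem_Tseq; split.
- move=> [hx hn].
  set m := x %/ (s + 2); set j := x %% (s + 2).
  have hxe : x = m * (s + 2) + j by rewrite /m /j -divn_eq.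
  have hj : j < s + 2 by rewrite /j ltn_mod; lia.
  case: (posnP j) => hj0.
    exfalso; apply: hn; exists 0, 0, m; rewrite hxe hj0; lia.
  case: (leqP s (2 * m + j)) => hsj.
    exfalso; apply: hn.
    set r := 2 * m + j - s.
    exists (m.+1 - r %/ 2 - r %% 2), (r %% 2), (r %/ 2).
    have hr : r = 2 * (r %/ 2) + r %% 2 by lia.
    have he : r %% 2 <= 1 by lia.
    have hq : r %/ 2 + r %% 2 <= m.+1 by rewrite /r; lia.
    move: hr he hq; set q := r %/ 2; set e := r %% 2 => hr he hq.
    have -> : m.+1 - q - e = m.+1 - (q + e) by lia.
    rewrite mulnBl hxe; move: hr; rewrite /r; nia.
  exists m, j; rewrite /Mlev /Llev; split => //; lia.
- move=> [m [j [h1 h2 h3 ->]]]; split; first lia.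
  move=> [k1 [k2 [k3 he]]].
  move: h1 h3; rewrite /Mlev /Llev => h1 h3.
  case: (leqP (k1 + k2 + k3) m) => hk.
  + have : (k1 + k2 + k3) * (s + 2) <= m * (s + 2) by rewrite leq_mul2r hk orbT.
    lia.
  + have : m.+1 * s <= (k1 + k2 + k3) * s by rewrite leq_mul2r hk orbT.
    lia.
Qed.


Lemma lev_eq s m j : j < s + 2 -> (m * (s + 2) + j) %/ (s + 2) = m.
Proof. move=> hj; rewrite divnMDl ?divn_small ?addn0 //; lia. Qed.

Lemma Tseq_uniq s : uniq (Tseq s).
Proof.
rewrite /Tseq; elim: (Mlev s).+1 => [|k IH] //.
rewrite -[k.+1]addn1 iotaD map_cat flatten_cat cat_uniq IH /=.
rewrite cats0 map_inj_uniq ?iota_uniq ?andbT; last by move=> a b /= /eqP; rewrite eqn_add2l => /eqP.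
apply/hasPn => x /mapP [j hj ->]; apply/negP => /flattenP [t /mapP [m hm ->] /mapP [j' hj' he]].
rewrite mem_iota in hj; rewrite mem_iota in hj'; rewrite mem_iota in hm.
have := lev_eq m (_ : j' < s + 2); have := lev_eq (0 + k) (_ : j < s + 2).
rewrite /Llev in hj hj'; move=> h1 h2.
have e1 := h1 ltac:(lia); have e2 := h2 ltac:(lia).
rewrite -he in e2; lia.
Qed.

Section Levels.
Variables (s : nat) (X : seq nat).
Hypotheses (hXu : uniq X) (hXT : {subset X <= Tseq s}).

Definition cnt m := \sum_(j <- iota 1 (Llev s m) | m * (s + 2) + j \in X) 1.
Definition sig m := \sum_(j <- iota 1 (Llev s m) | m * (s + 2) + j \in X) j.

Lemma sum_levels (F : nat -> nat) : \sum_(x <- X) F x =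
  \sum_(m <- iota 0 (Mlev s).+1) \sum_(j <- iota 1 (Llev s m) | m * (s + 2) + j \in X)
      F (m * (s + 2) + j).
Proof.
have hp : perm_eq X [seq x <- Tseq s | x \in X].
  apply: uniq_perm => //; first by rewrite filter_uniq // Tseq_uniq.
  by move=> x; rewrite mem_filter; case hx: (x \in X) => //=; rewrite (hXT hx).
rewrite (perm_big _ hp) big_filter /Tseq big_flatten big_map.
apply: eq_bigr => m _; by rewrite big_map.
Qed.

Lemma size_levels : size X = \sum_(m <- iota 0 (Mlev s).+1) cnt m.
Proof.
have -> : size X = \sum_(x <- X) 1 by rewrite sum1_size.
by rewrite sum_levels.
Qed.

Lemma sumn_levels : sumn X = \sum_(m <- iota 0 (Mlev s).+1) (m * (s + 2) * cnt m + sig m).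
Proof.
rewrite sumnE sum_levels; apply: eq_bigr => m _.
rewrite /cnt /sig big_distrr /= -big_split /=; apply: eq_bigr => j _; lia.
Qed.

End Levels.


Definition cntp (L : nat) (p : pred nat) := \sum_(j <- iota 1 L | p j) 1.
Definition sigp (L : nat) (p : pred nat) := \sum_(j <- iota 1 L | p j) j.

Lemma cntpS L p : cntp L.+1 p = cntp L p + p L.+1.
Proof.
rewrite /cntp -[L.+1]addn1 iotaD big_cat /= big_cons big_nil add1n.
by rewrite addn1; case: (p L.+1).
Qed.

Lemma sigpS L p : sigp L.+1 p = sigp L p + (if p L.+1 then L.+1 else 0).
Proof.
rewrite /sigp -[L.+1]addn1 iotaD big_cat /= big_cons big_nil add1n.
by rewrite addn1; case: (p L.+1); rewrite ?addn0.
Qed.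

Lemma cntp0 p : cntp 0 p = 0. Proof. by rewrite /cntp big_nil. Qed.
Lemma sigp0 p : sigp 0 p = 0. Proof. by rewrite /sigp big_nil. Qed.

Lemma rj_bound L p :
  [/\ cntp L p <= L,
      2 * sigp L p + cntp L p * (cntp L p).-1 <= 2 * cntp L p * L &
      (2 * sigp L p + cntp L p * (cntp L p).-1 = 2 * cntp L p * L ->
       forall j, 1 <= j <= L -> p j = (L - cntp L p < j))].
Proof.
elim: L => [|L [IH1 IH2 IH3]]; first by rewrite cntp0 sigp0; split => // _ j; lia.
rewrite cntpS sigpS; case hp: (p L.+1) => /=.
- split; [lia | nia |].
  move=> he j hj.
  have he' : 2 * sigp L p + cntp L p * (cntp L p).-1 = 2 * cntp L p * L by nia.
  case: (ltnP j L.+1) => hjL.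
  + rewrite (IH3 he' j ltac:(lia)); apply/idP/idP; lia.
  + have -> : j = L.+1 by lia.
    rewrite hp; lia.
- rewrite !addn0; split; [lia | nia |].
  move=> he.
  have hc0 : cntp L p = 0 by nia.
  have he' : 2 * sigp L p + cntp L p * (cntp L p).-1 = 2 * cntp L p * L by nia.
  move=> j hj; case: (ltnP j L.+1) => hjL.
  + rewrite (IH3 he' j ltac:(lia)) hc0; apply/idP/idP; lia.
  + have -> : j = L.+1 by lia.
    rewrite hp; lia.
Qed.

Lemma cntp_le L (p q : pred nat) : (forall j, p j -> q j) -> cntp L p <= cntp L q.
Proof.
move=> hpq; elim: L => [|L IH]; first by rewrite !cntp0.
rewrite !cntpS; case hp: (p L.+1); first by rewrite (hpq _ hp); lia.
lia.
Qed.

Lemma cntp_feas L (p q : pred nat) :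
  (forall j, 1 <= j <= L -> p j -> [&& q j, q j.+1 & q j.+2]) ->
  cntp L p = 0 \/ cntp L p + 2 <= cntp L.+2 q.
Proof.
elim: L => [|L IH] H; first by left; rewrite cntp0.
have IH' := IH (fun j hj => H j ltac:(lia)).
rewrite cntpS; case hp: (p L.+1) => /=.
- right; move/and3P: (H L.+1 ltac:(lia) hp) => [q1 q2 q3].
  rewrite (cntpS L.+2) q3.
  case: IH' => [h0|h].
  + rewrite h0 (cntpS L.+1) q2 (cntpS L) q1; lia.
  + lia.
- rewrite addn0; case: IH' => [h0|h]; first by left.
  right; rewrite (cntpS L.+2); lia.
Qed.


Lemma leq_sum_nat m n (F G : nat -> nat) :
  (forall i, m <= i < n -> F i <= G i) ->
  \sum_(m <= i < n) F i <= \sum_(m <= i < n) G i.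
Proof. by move=> h; rewrite big_nat [X in _ <= X]big_nat; apply: leq_sum. Qed.

Lemma cheb N (g b : nat -> nat) :
  (forall i j, i <= j -> j < N -> g i <= g j) ->
  (forall i j, i <= j -> j < N -> b i <= b j) ->
  (\sum_(0 <= i < N) g i) * (\sum_(0 <= i < N) b i) <= N * \sum_(0 <= i < N) g i * b i.
Proof.
elim: N => [|N IH] hg hb; first by rewrite !big_geq.
have IH' := IH (fun i j h1 h2 => hg i j h1 (ltnW h2)) (fun i j h1 h2 => hb i j h1 (ltnW h2)).
rewrite !big_nat_recr //=.
have key : \sum_(0 <= i < N) (g N * b i + g i * b N) <=
           \sum_(0 <= i < N) (g i * b i + g N * b N).
  apply: leq_sum_nat => i hi.
  have h1 := hg i N ltac:(lia) ltac:(lia); have h2 := hb i N ltac:(lia) ltac:(lia).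
  nia.
move: key; rewrite !big_split /= -!big_distrr -!big_distrl /= sum_nat_const_nat subn0.
set G := \sum_(0 <= i < N) g i; set B := \sum_(0 <= i < N) b i.
set GB := \sum_(0 <= i < N) g i * b i.
move=> key; nia.
Qed.

Lemma prefix_count n (p : pred nat) :
  (forall k k', k <= k' -> k' < n -> p k' -> p k) ->
  forall k, k < n -> (k < count p (iota 0 n)) = p k.
Proof.
elim: n => [|n IH] H k hk //.
rewrite -[n.+1]addn1 iotaD count_cat /= addn0 add0n.
case hpn: (p n).
- have hall : forall j, j < n -> p j by move=> j hj; apply: (H j n) => //; lia.
  have -> : count p (iota 0 n) = n.
    rewrite (@eq_in_count _ p predT) ?count_predT ?size_iota //.
    by move=> j; rewrite mem_iota => hj; apply: hall; lia.
  rewrite addn1 ltnS; apply/esym; case: (ltnP k n) => hkn; first by rewrite hall.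
  have -> : k = n by lia. 
  by rewrite hpn leqnn.
- rewrite addn0; case: (ltnP k n) => hkn.
    by apply: IH => // k0 k1 h1 h2; apply: H => //; lia.
  have -> : k = n by lia.
  rewrite hpn; apply/negbTE; rewrite -leqNgt.
  by rewrite -{2}(size_iota 0 n) count_size.
Qed.

Lemma count_iota_le n (p : pred nat) : count p (iota 0 n) <= n.
Proof. by rewrite -{2}(size_iota 0 n) count_size. Qed.

Lemma Mlev_s s : 3 <= s -> s = 2 * Mlev s + 2 + odd s.
Proof. rewrite /Mlev => hs; have h := modn2 s; case: (odd s) h => /= h; lia. Qed.

Lemma Mlev_le s : 3 <= s -> 2 * (Mlev s).+1 <= s.
Proof. by move/Mlev_s => h; lia. Qed.

Lemma sum_iota2 K : 2 * \sum_(0 <= m < K) m = K * K.-1.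
Proof.
elim: K => [|K IH]; first by rewrite big_geq.
rewrite big_nat_recr //= mulnDr IH; case: K {IH} => //= K; nia.
Qed.

Lemma sumL s K : 2 * K <= s -> \sum_(0 <= m < K) Llev s m = K * (s - K).
Proof.
elim: K => [|K IH] hK; first by rewrite big_geq.
rewrite big_nat_recr //= IH; last lia.
rewrite /Llev; nia.
Qed.

Definition Lamf s k := \sum_(k <= m < (Mlev s).+1) Llev s m.
Definition STf s k := \sum_(k <= m < (Mlev s).+1)
   (2 * (m * (s + 2)) * Llev s m + Llev s m * (Llev s m).+1).

Lemma top_bound s k : 3 <= s -> k <= (Mlev s).+1 ->
  2 * (k * (s - k)) * Lamf s k + Lamf s k * Lamf s k + 2 * (k.+1 * k.+1) * Lamf s k
    <= STf s k + Lamf s k /\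
  (s - 2 * k) * (s - 2 * k) <= 4 * Lamf s k + 1.
Proof.
move=> hs; have hM := Mlev_le hs.
set M := Mlev s in hM *.
move=> hk; have [d hd] : exists d, k + d = M.+1 by exists (M.+1 - k); lia.
elim: d k hk hd => [|d IH] k hk hd.
  rewrite /Lamf /STf -/M !big_geq; last lia; last lia.
  have := Mlev_s hs; rewrite -/M => hs'.
  split; first lia.
  case: (odd s) hs' => /= hs'; nia.
have [IH1 IH2] := IH k.+1 ltac:(lia) ltac:(lia).
rewrite /Lamf /STf -/M big_ltn; last lia.
rewrite [X in _ <= X + _]big_ltn; last lia.
rewrite -/M in IH1 IH2.
move: IH1 IH2; rewrite /Lamf /STf -/M.
set A := \sum_(k.+1 <= m < M.+1) _.
set La := \sum_(k.+1 <= m < M.+1) _.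
rewrite /Llev.
have hL : 1 <= s - 2 * k - 1 by lia.
set L := s - 2 * k - 1 in hL *.
have hsL : s = L + 2 * k + 1 by rewrite /L; lia.
rewrite hsL; move=> IH1 IH2.
have e1 : L + 2 * k + 1 - k = L + k + 1 by lia.
have e2 : L + 2 * k + 1 - k.+1 = L + k by lia.
have e3 : L + 2 * k + 1 - 2 * k = L + 1 by lia.
have e4 : L + 2 * k + 1 - 2 * k.+1 = L - 1 by lia.
rewrite e2 e4 in IH1 IH2; rewrite e1 e3.
split; nia.
Qed.

Lemma sum0_nat m n (F : nat -> nat) : (forall i, m <= i < n -> F i = 0) ->
  \sum_(m <= i < n) F i = 0.
Proof. by move=> h; rewrite big_nat big1. Qed.

Lemma full_case (K e : nat) (b : nat -> nat) : 1 <= K -> e <= 1 ->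
  (forall i j, i <= j -> j < K -> b i <= b j) ->
  2 * (K * (K + e)) * (\sum_(0 <= m < K) b m) + (\sum_(0 <= m < K) (b m - b 0) * (b m - b 0))
    + K * K.+1 * (b 0 * (b 0 - e))
    <= 2 * (2 * K + e + 2) * (\sum_(0 <= m < K) m * b m) + (\sum_(0 <= m < K) b m * b m)
       + 2 * (\sum_(0 <= m < K) b m) + (\sum_(0 <= m < K) b m) * (\sum_(0 <= m < K) b m).
Proof.
move=> hK he hb.
set s := 2 * K + e. set SB := \sum_(0 <= m < K) b m.
set SB2 := \sum_(0 <= m < K) b m * b m. set SMB := \sum_(0 <= m < K) m * b m.
set P := K * (K + e).
set c := b 0.
set d := fun m => b m - c.
have hbd : forall m, m < K -> b m = c + d m.
  by move=> m hm; rewrite /d /c; have := hb 0 m (leq0n _) hm; lia.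
set SD := \sum_(0 <= m < K) d m.
set SD2 := \sum_(0 <= m < K) d m * d m.
set SMD := \sum_(0 <= m < K) m * d m.
have eSB : SB = K * c + SD.
  rewrite /SB (eq_big_nat _ _ (F2 := fun m => c + d m)); last by move=> i hi; apply: hbd; lia.
  by rewrite big_split /= sum_nat_const_nat subn0.
have eSB2 : SB2 = K * (c * c) + 2 * c * SD + SD2.
  rewrite /SB2 (eq_big_nat _ _ (F2 := fun m => c * c + 2 * c * d m + d m * d m)); last first.
    by move=> i hi; rewrite (hbd i) ?ltnS; try lia; nia.
  by rewrite !big_split /= sum_nat_const_nat subn0 -big_distrr.
have eSMB : 2 * SMB = c * (K * K.-1) + 2 * SMD.
  rewrite /SMB (eq_big_nat _ _ (F2 := fun m => c * m + m * d m)); last first.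
    by move=> i hi; rewrite (hbd i) ?ltnS; try lia; nia.
  by rewrite big_split /= -big_distrr /= mulnDr mulnCA sum_iota2.
have d0 : d 0 = 0 by rewrite /d /c subnn.
have hch : P * SD <= (s + 2) * SMD + (1 + c * K.+1) * SD.
  have eS : (s + 2) * SMD + (1 + c * K.+1) * SD =
            \sum_(0 <= m < K) (m * (s + 2) + 1 + c * K.+1) * d m.
    rewrite /SMD /SD big_distrr /= big_distrr /= -big_split /=.
    by apply: eq_big_nat => i _; nia.
  rewrite eS /SD.
  rewrite big_ltn // [X in _ <= X]big_ltn // d0 !muln0 !add0n.
  have -> : 1 = 0 + 1 by [].
  rewrite !big_addn.
  case: (ltnP 1 K) => hK1; last first.
    by rewrite !big_geq ?muln0 //; lia.
  have hc := @cheb (K - 1) (fun i => (i + 1) * (s + 2) + 1 + c * K.+1) (fun i => d (i + 1))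
     (fun i j h1 h2 => ltac:(nia)) (fun i j h1 h2 => ltac:(rewrite /d; have := hb (i+1) (j+1) ltac:(lia) ltac:(lia); lia)).
  move: hc.
  set Sg := \sum_(0 <= i < K - 1) _.
  set Sd := \sum_(0 <= i < K - 1) d (i + 1).
  set Sgd := \sum_(0 <= i < K - 1) _.
  have eSg : 2 * Sg = (s + 2) * ((K - 1) * K) + 2 * (K - 1) * (1 + c * K.+1).
    rewrite /Sg (eq_big_nat _ _ (F2 := fun i => (s + 2) * (i + 1) + (1 + c * K.+1))); last by move=> i _; nia.
    rewrite big_split /= -big_distrr /= sum_nat_const_nat subn0.
    have : 2 * \sum_(0 <= i < K - 1) (i + 1) = (K - 1) * K.
      rewrite big_split /= sum_nat_const_nat subn0 mulnDr sum_iota2.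
      case: K hK hK1 {hb hbd eSB eSB2 eSMB eS Sg Sd Sgd P s c d SD SD2 SMD SB SB2 SMB d0} => //= K _ _; nia.
    nia.
  move=> hc.
  have : (K - 1) * (P * Sd) <= (K - 1) * Sgd.
    apply: leq_trans hc; rewrite mulnA; apply: leq_mul => //.
    rewrite /P /s in eSg *; nia.
  by rewrite leq_mul2l; case/orP => // /eqP; lia.
rewrite /s in hch *.
rewrite /P in hch *.
have hSMB2 : 2 * (2 * K + e + 2) * SMB = (2 * K + e + 2) * (2 * SMB) by rewrite -mulnA mulnCA.
rewrite hSMB2 eSMB eSB2 eSB.
move: hch; rewrite /s /P.
clearbody c d SD SD2 SMD s P SB SB2 SMB.
clear eSB eSB2 eSMB hSMB2 hbd hb.
case: K hK => // K _.
case: c => [|c]; case: e he => [|[|//]] _ /= hch; nia.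
Qed.

Lemma amgm2 x y : 4 * x * y <= 4 * (x * x) + y * y.
Proof.
case: (leqP y (2 * x)) => h.
- have [d hd] : exists d, 2 * x = y + d by exists (2 * x - y); lia.
  have -> : 4 * x * y = 2 * (2 * x) * y by lia.
  have -> : 4 * (x * x) = (2 * x) * (2 * x) by lia.
  rewrite hd; nia.
- have [d hd] : exists d, y = 2 * x + d by exists (y - 2 * x); lia.
  rewrite hd; nia.
Qed.

Lemma ar_eg s K : 0 < K -> 2 * K <= s ->
  (s + 2) * (K * K.-1) + K * (2 + K.+1 * (s - 2 * K)) = 2 * K * (K * (s - K)).
Proof.
move=> hK h; have [t ->] : exists t, s = 2 * K + t by exists (s - 2 * K); lia.
rewrite addKn (_ : 2 * K + t - K = K + t); last lia.
case: K hK {h} => // K _ /=; nia.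
Qed.

Lemma sq_ge x : x <= x * x.
Proof. by case: x => // n; rewrite leq_pmull. Qed.

Lemma mulpred x : x * x.-1 = x * x - x.
Proof. by rewrite -subn1 mulnBr muln1. Qed.

Lemma ar_strict K N SB X SRl STl SNl La STt u :
  2 <= u ->
  STl + SNl = SRl + X + SB ->
  2 * (N + SB) * La + La * La + 2 * (K.+1 * K.+1) * La <= STt + La ->
  K.+1 * K.+1 * (u * u) <= K.+1 * K.+1 * (4 * La + 1) ->
  4 * (K.+1 * K.+2) <= K.+1 * K.+2 * (u * u) ->
  8 * (N + SB) * SB <= 4 * (X + 2 * SB + SB * SB) + K * K.+1 * (u * u) ->
  SRl + (N + SB + La) * (N + SB + La).-1 < STl + STt + N * N.-1 + SNl.
Proof.
move=> hu2 hST t1 h8 h9 hD.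
rewrite !mulpred.
have a1 := sq_ge (N + SB + La).
have a2 := sq_ge N.
lia.
Qed.

Lemma ar_key N SB X SRl STl SNl Z :
  STl + SNl = SRl + X + SB ->
  2 * (N + SB) * SB + Z <= X + 2 * SB + SB * SB ->
  SRl + (N + SB) * (N + SB).-1 + Z <= STl + N * N.-1 + SNl.
Proof.
move=> hST hZ.
rewrite !mulpred.
have a1 := sq_ge (N + SB).
have a2 := sq_ge N.
lia.
Qed.

Lemma ar_term A L x : x <= L ->
  2 * A * L + L * L.+1 + x * x.-1 =
  2 * A * x + 2 * x * L + 2 * A * (L - x) + (L - x) * (L - x) + (L - x).
Proof.
move=> h; have [y ->] : exists y, L = x + y by exists (L - x); lia.
rewrite addKn; case: x {h} => [|x] /=; nia.
Qed.

Lemma e_gb i s c b : (2 * (i * (s + 2)) + 2 + c) * b = 2 * (s + 2) * (i * b) + (2 + c) * b.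
Proof. nia. Qed.

Lemma e_g i s c : 2 * (i * (s + 2)) + 2 + c = (s + 2) * (2 * i) + (2 + c).
Proof. nia. Qed.

Lemma e_ms i s b : 2 * (i * (s + 2)) * b = 2 * (s + 2) * (i * b).
Proof. nia. Qed.

Lemma term_le_sum m K (F : nat -> nat) : m < K -> F m <= \sum_(0 <= i < K) F i.
Proof.
move=> h; rewrite (big_cat_nat (leq0n m) (ltnW h)) /= [X in _ + X]big_ltn //.
by rewrite addnCA leq_addr.
Qed.

Lemma core_ineq s (n : nat -> nat) : 3 <= s ->
  (forall m, m <= Mlev s -> n m <= Llev s m) ->
  (forall m, 0 < m -> m <= Mlev s -> 0 < n m -> n m + 2 <= n m.-1) ->
  let SR := \sum_(0 <= m < (Mlev s).+1) (2 * (m * (s + 2)) * n m + 2 * n m * Llev s m) in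
  let NT := \sum_(0 <= m < (Mlev s).+1) Llev s m in
  let ST := \sum_(0 <= m < (Mlev s).+1)
        (2 * (m * (s + 2)) * Llev s m + Llev s m * (Llev s m).+1) in
  let NX := \sum_(0 <= m < (Mlev s).+1) n m in
  let SN := \sum_(0 <= m < (Mlev s).+1) n m * (n m).-1 in
  SR + NT * NT.-1 <= ST + NX * NX.-1 + SN /\
  (SR + NT * NT.-1 = ST + NX * NX.-1 + SN ->
   (forall m, m <= Mlev s -> n m = Llev s m) \/
   (odd s /\ forall m, m <= Mlev s -> n m = (Llev s m).-1)).
Proof.
move=> hs H1 H2 SR NT ST NX SN.
have hM := Mlev_le hs. have hsM := Mlev_s hs.
rewrite /SR /NT /ST /NX /SN; clear SR NT ST NX SN.
set M := Mlev s in H1 H2 hM hsM *.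
have hdc : forall k k', k <= k' -> k' < M.+1 -> 0 < n k' -> 0 < n k.
  move=> k k'; elim: k' => [|k' IH] hkk' hk' hn; first by have -> : k = 0 by lia.
  case: (ltnP k k'.+1) => hk; last by have -> : k = k'.+1 by lia.
  apply: IH; [lia | lia |].
  have := H2 k'.+1 ltac:(lia) ltac:(lia) hn; rewrite /=; lia.
set K := count (fun m => 0 < n m) (iota 0 M.+1).
have hK : forall m, m < M.+1 -> (m < K) = (0 < n m) := prefix_count hdc.
have hKle : K <= M.+1 := count_iota_le _ _.
have hsK : 2 * K <= s by lia.
have htop : forall m, K <= m < M.+1 -> n m = 0.
  move=> m /andP [h1 h2]; move: (hK m h2); rewrite ltnNge h1 /=; lia.
have hlow : forall m, m < K -> 0 < n m.
  by move=> m hm; rewrite -hK // (leq_trans hm hKle).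
set b := fun m => Llev s m - n m.
have hb1 : forall m, 0 < m -> m < K -> b m.-1 <= b m.
  move=> m h0 hm; have := H2 m h0 ltac:(lia) (hlow m hm); have := H1 m ltac:(lia).
  have := H1 m.-1 ltac:(lia); rewrite /b /Llev; lia.
have hbmono : forall i j, i <= j -> j < K -> b i <= b j.
  move=> i j; elim: j => [|j IH] hij hj; first by have -> : i = 0 by lia.
  case: (ltnP i j.+1) => hi; last by have -> : i = j.+1 by lia.
  apply: leq_trans (IH ltac:(lia) ltac:(lia)) _; exact: (hb1 j.+1).
rewrite !(big_cat_nat (leq0n K) hKle) /=.
have z1 : \sum_(K <= m < M.+1) (2 * (m * (s + 2)) * n m + 2 * n m * Llev s m) = 0.
  by apply: sum0_nat => i hi; rewrite htop // ?muln0 ?mul0n.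
have z2 : \sum_(K <= m < M.+1) n m = 0 by apply: sum0_nat => i hi; rewrite htop // ?muln0 ?mul0n.
have z3 : \sum_(K <= m < M.+1) n m * (n m).-1 = 0 by apply: sum0_nat => i hi; rewrite htop // ?muln0 ?mul0n.
rewrite z1 z2 z3 !addn0.
have eP : \sum_(0 <= m < K) Llev s m = K * (s - K) by apply: sumL.
rewrite eP.
set SRl := \sum_(0 <= m < K) _.
set STl := \sum_(0 <= m < K) (2 * (m * (s + 2)) * Llev s m + Llev s m * (Llev s m).+1).
set NXl := \sum_(0 <= m < K) n m.
set SNl := \sum_(0 <= m < K) n m * (n m).-1.
set SB := \sum_(0 <= m < K) b m.
set SB2 := \sum_(0 <= m < K) b m * b m.
set SMB := \sum_(0 <= m < K) m * b m.
have eNX : NXl + SB = K * (s - K).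
  rewrite -eP /NXl /SB -big_split /=; apply: eq_big_nat => i hi.
  have := H1 i ltac:(lia); rewrite /b; lia.
have eST : STl + SNl = SRl + (2 * (s + 2) * SMB + SB2) + SB.
  rewrite addnA /STl /SNl /SRl /SMB /SB2 /SB -big_split /= big_distrr /= -!big_split /=.
  apply: eq_big_nat => i hi; rewrite ar_term ?(H1 i) //; last lia.
  by rewrite /b -e_ms.
have [t1 t2] := top_bound hs hKle.
rewrite -/M in t1 t2.
set La := Lamf s K in t1 t2.
set STt := STf s K in t1 t2.
have -> : \sum_(K <= m < M.+1) Llev s m = La by [].
have -> : \sum_(K <= m < M.+1)
   (2 * (m * (s + 2)) * Llev s m + Llev s m * (Llev s m).+1) = STt by [].
have [N hN] : exists N, NXl = N by exists NXl.
have eP2 : K * (s - K) = N + SB by rewrite -eNX hN.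
rewrite hN eP2; rewrite eP2 in t1.
case: (ltnP K M.+1) => hKM.
- (* some empty top level: strict inequality *)
  have hu : 2 <= s - 2 * K by lia.
  set u := s - 2 * K in hu t2.
  have hd1 : 2 * (N + SB) * SB <= 2 * (s + 2) * SMB + (2 + K.+1 * u) * SB.
    case: (posnP K) => hK0.
      have -> : SB = 0 by rewrite /SB hK0 big_geq. by rewrite !muln0.
    have hg : forall i j, i <= j -> j < K ->
        2 * (i * (s + 2)) + 2 + K.+1 * u <= 2 * (j * (s + 2)) + 2 + K.+1 * u.
      by move=> i j h1 _; rewrite !leq_add2r leq_mul2l leq_mul2r h1 !orbT.
    have hc := @cheb K (fun m => 2 * (m * (s + 2)) + 2 + K.+1 * u) b hg hbmono.
    have eg : \sum_(0 <= m < K) (2 * (m * (s + 2)) + 2 + K.+1 * u) = 2 * K * (N + SB).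
      have e1 : \sum_(0 <= m < K) (2 * (m * (s + 2)) + 2 + K.+1 * u) =
          (s + 2) * (2 * \sum_(0 <= m < K) m) + \sum_(0 <= m < K) (2 + K.+1 * u).
        rewrite big_distrr big_distrr /= -big_split /=; apply: eq_big_nat => i _.
        by rewrite e_g.
      by rewrite e1 sum_iota2 sum_nat_const_nat subn0 /u ar_eg // eP2.
    have egb : \sum_(0 <= m < K) (2 * (m * (s + 2)) + 2 + K.+1 * u) * b m
                = 2 * (s + 2) * SMB + (2 + K.+1 * u) * SB.
      rewrite /SMB /SB !big_distrr /= -big_split /=; apply: eq_big_nat => i _.
      by rewrite e_gb.
    rewrite eg egb in hc.
    have : K * (2 * (N + SB) * SB) <= K * (2 * (s + 2) * SMB + (2 + K.+1 * u) * SB).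
      by apply: leq_trans hc; rewrite !mulnA [K * 2]mulnC.
    by rewrite leq_mul2l; case/orP => // /eqP; lia.
  have hsq1 : 4 * u * SB <= 4 * SB2 + K * (u * u).
    have : \sum_(0 <= m < K) (4 * u * b m) <= \sum_(0 <= m < K) (4 * (b m * b m) + u * u).
      apply: leq_sum_nat => i _; rewrite mulnAC; exact: amgm2.
    rewrite big_split /= -!big_distrr /= sum_nat_const_nat subn0. by rewrite [u * (K * u)]mulnCA.
  have hsq2 : 4 * K * u * SB <= 4 * (SB * SB) + K * K * (u * u).
    have h := amgm2 SB (K * u); clear -h; nia.
  have h8 : K.+1 * K.+1 * (u * u) <= K.+1 * K.+1 * (4 * La + 1) by rewrite leq_mul2l t2 orbT.
  have hu4 : 4 <= u * u by have := leq_mul hu hu.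
  have h9 : 4 * (K.+1 * K.+2) <= K.+1 * K.+2 * (u * u) by rewrite mulnC leq_mul2l hu4 orbT.
  have hD : 8 * (N + SB) * SB <= 4 * (2 * (s + 2) * SMB + SB2 + 2 * SB + SB * SB) + K * K.+1 * (u * u).
    clear -hd1 hsq1 hsq2; lia.
  have strict := ar_strict hu eST t1 h8 h9 hD.
  split; first exact: ltnW.
  by move=> he; rewrite he ltnn in strict.
- (* all levels nonempty *)
  have hKe : K = M.+1 by lia.
  have hLa : La = 0 by rewrite /La /Lamf -/M big_geq // hKe.
  have hSTt : STt = 0 by rewrite /STt /STf -/M big_geq // hKe.
  rewrite hLa hSTt !addn0.
  have hs2 : s = 2 * K + odd s by lia.
  have hfc := @full_case K (odd s) b ltac:(lia) (leq_b1 _) hbmono.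
  rewrite -/SB -/SB2 -/SMB -hs2 in hfc.
  have hKs : K * (K + odd s) = N + SB by rewrite -eP2; congr (_ * _); lia.
  rewrite hKs in hfc.
  set SD2 := \sum_(0 <= m < K) (b m - b 0) * (b m - b 0) in hfc.
  set c := b 0 in hfc *.
  have hfc' : 2 * (N + SB) * SB + (SD2 + K * K.+1 * (c * (c - odd s)))
      <= 2 * (s + 2) * SMB + SB2 + 2 * SB + SB * SB by rewrite addnA.
  have hineq := ar_key eST hfc'.
  split; first by apply: leq_trans hineq; rewrite leq_addr.
  move=> heq.
  have hz : SD2 + K * K.+1 * (c * (c - odd s)) = 0.
    by move: hineq; rewrite heq -[X in _ <= X -> _]addn0 leq_add2l leqn0 => /eqP.
  have /andP [/eqP hSD2 hKc] : (SD2 == 0) && (K * K.+1 * (c * (c - odd s)) == 0).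
    by rewrite -addn_eq0 hz.
  have hcc : c * (c - odd s) = 0.
    by move: hKc; rewrite muln_eq0 => /orP [|/eqP //]; rewrite muln_eq0 hKe.
  have hbc : forall m, m < K -> b m = c.
    move=> m hm.
    have : (b m - c) * (b m - c) <= SD2.
      by rewrite /SD2 /c; apply: (term_le_sum (fun i => (b i - b 0) * (b i - b 0))).
    rewrite hSD2; have := hbmono 0 m (leq0n _) hm; rewrite -/c.
    move: (b m) => x; clearbody c; clear; nia.
  clearbody c.
  have hnm : forall m, m <= M -> n m = Llev s m - c.
    move=> m hm; have := hbc m ltac:(lia); have := H1 m hm; rewrite /b; lia.
  case: (posnP c) => hc0.
    by left => m hm; rewrite hnm // hc0 subn0.
  right; have ho : odd s.
    move: hcc; case: (odd s) => //=; rewrite subn0 => /eqP; rewrite muln_eq0 orbb => /eqP; lia.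
  split => // m hm; rewrite hnm //.
  move: hcc; rewrite ho /= => /eqP; rewrite muln_eq0 => /orP [/eqP|/eqP] h; lia.
Qed.


Section Part.
Variable la : seq nat.
Hypothesis hla : is_partition la.
Local Notation n := (size la).
Local Notation l i := (nth 0 la i).

Lemma part_mono i j : i <= j -> l j <= l i.
Proof.
move=> hij; case: (ltnP j n) => hj; last by rewrite nth_default.
move/andP: hla => [hs _].
have := @sorted_leq_nth _ geq (fun y x z h1 h2 => leq_trans h2 h1) (@leqnn) 0 la hs i.
by apply => //; rewrite inE; lia.
Qed.

Lemma part_pos i : i < n -> 0 < l i.
Proof. by move=> hi; move/andP: hla => [_ /allP]; apply; apply: mem_nth. Qed.

Lemma col_len_nth j : col_len la j = count (fun k => j < l k) (iota 0 n).
Proof. by rewrite /col_len -{1}(mkseq_nth 0 la) /mkseq count_map. Qed.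

Lemma col_len_le j : col_len la j <= n.
Proof. by rewrite /col_len count_size. Qed.

Lemma col_len_lt j k : (k < col_len la j) = (j < l k).
Proof.
case: (ltnP k n) => hk.
  rewrite col_len_nth; apply: (prefix_count (p := fun k => j < l k)) => // a b hab _ h.
  exact: leq_trans h (part_mono hab).
rewrite nth_default //; apply/negbTE; rewrite -leqNgt.
exact: leq_trans (col_len_le j) hk.
Qed.

Lemma col_len0 : col_len la 0 = n.
Proof.
rewrite col_len_nth (@eq_in_count _ _ predT) ?count_predT ?size_iota //.
by move=> k; rewrite mem_iota => hk; apply: part_pos; lia.
Qed.

Definition bf i := l i + (n - i) - 1.

Lemma hook0 i : i < n -> hook la i 0 = bf i.
Proof. by move=> hi; rewrite /hook /bf subn0 col_len0. Qed.

Lemma beta_eq : beta la = [seq bf i | i <- iota 0 n].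
Proof. by apply/eq_in_map => i; rewrite mem_iota => hi; apply: hook0; lia. Qed.

Lemma size_beta : size (beta la) = n.
Proof. by rewrite /beta size_map size_iota. Qed.

Lemma nth_beta i : i < n -> nth 0 (beta la) i = bf i.
Proof. by move=> hi; rewrite beta_eq (nth_map 0) ?size_iota // nth_iota. Qed.

Lemma bf_ge i : i < n -> n - i <= bf i.
Proof. move=> hi; have := part_pos hi; rewrite /bf; lia. Qed.

Lemma bf_dec i j : i <= j -> j < n -> bf j + (j - i) <= bf i.
Proof. move=> hij hj; have := part_mono hij; have := part_pos hj; rewrite /bf; lia. Qed.

Lemma mem_beta c : (c \in beta la) = has (fun i => c == bf i) (iota 0 n).
Proof.
rewrite beta_eq; apply/mapP/hasP => [[i hi ->]|[i hi /eqP ->]]; by exists i.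
Qed.

Lemma mem_betaP c : reflect (exists2 i, i < n & c = bf i) (c \in beta la).
Proof.
rewrite mem_beta; apply: (iffP hasP) => [[i hi /eqP ->]|[i hi ->]].
  by exists i => //; move: hi; rewrite mem_iota.
by exists i; rewrite ?mem_iota //.
Qed.

Lemma beta_pos c : c \in beta la -> 0 < c.
Proof. by case/mem_betaP => i hi ->; have := bf_ge hi; lia. Qed.

Lemma mem_hooks h : reflect (exists i j, [/\ i < n, j < l i & h = hook la i j]) (h \in hooks la).
Proof.
apply: (iffP allpairsPdep) => [[i [j [hi hj ->]]]|[i [j [hi hj ->]]]].
  by exists i, j; rewrite mem_iota in hi; rewrite mem_iota in hj; split => //; lia.
by exists i, j; rewrite !mem_iota; split => //; lia.
Qed.

Lemma hook_gap h : h \in hooks la ->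
  exists i c, [/\ i < n, c < bf i, c \notin beta la & h = bf i - c].
Proof.
case/mem_hooks => i [j [hi hj ->]].
set r := col_len la j.
have hir : i < r by rewrite col_len_lt.
have hrn : r <= n := col_len_le j.
exists i, (j + n - r); split => //.
- have := bf_ge hi; rewrite /bf; lia.
- apply/mem_betaP => [[k hk he]].
  case: (ltnP k r) => hkr.
  + have : j < l k by rewrite -col_len_lt.
    move: he; rewrite /bf; lia.
  + have : ~~ (j < l k) by rewrite -col_len_lt -leqNgt.
    move: he; rewrite /bf; lia.
- rewrite /hook /bf -/r; lia.
Qed.

Lemma gap_hook i c : i < n -> c < bf i -> c \notin beta la -> bf i - c \in hooks la.
Proof.
move=> hi hc hnot.
have hdc : forall k k', k <= k' -> k' < n -> c < bf k' -> c < bf k.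
  move=> k k' hkk' hk' h; have := bf_dec hkk' hk'; lia.
set r := count (fun k => c < bf k) (iota 0 n).
have hr : forall k, k < n -> (k < r) = (c < bf k) := prefix_count hdc.
have hrn : r <= n := count_iota_le _ _.
have hir : i < r by rewrite hr.
have hne : forall k, k < n -> c != bf k.
  by move=> k hk; apply: contra hnot => /eqP ->; apply/mem_betaP; exists k.
have hcr : n - r <= c.
  case: (ltnP r n) => hrn'; last lia.
  have h1 : ~~ (c < bf r) by rewrite -hr // ltnn.
  have h2 := bf_ge hrn'; have h3 := hne r hrn'; lia.
set j := c - (n - r).
have hcol : col_len la j = r.
  rewrite col_len_nth (@eq_in_count _ _ (fun k => k < r)).
    rewrite -(subnKC hrn) iotaD count_cat.
    rewrite (@eq_in_count _ _ predT) ?count_predT ?size_iota; last first.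
      by move=> k; rewrite mem_iota => hk /=; lia.
    rewrite (@eq_in_count _ _ pred0) ?count_pred0 ?addn0 //.
    by move=> k; rewrite mem_iota => hk /=; lia.
  move=> k; rewrite mem_iota => hk; rewrite hr; last lia.
  case: (ltnP c (bf k)) => hck.
  +
    have hkr : k < r by rewrite hr //; lia.
    have hr1 : r.-1 < n by lia.
    have hb1 : c < bf r.-1 by rewrite -hr //; lia.
    have := bf_dec (_ : k <= r.-1) hr1; rewrite /bf in hb1 *; lia.
  +
    have hkr : r <= k by rewrite leqNgt hr //; lia.
    have hne' := hne k ltac:(lia).
    case: (ltnP r n) => hrn'; last lia.
    have := bf_dec hkr ltac:(lia); have hbr : ~~ (c < bf r) by rewrite -hr // ltnn.
    have := hne r hrn'; rewrite /bf in hck hne' hbr *; lia.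
have hj : j < l i by rewrite -col_len_lt hcol.
apply/mem_hooks; exists i, j; split => //.
rewrite /hook hcol; move: hj hc; rewrite /bf /j; have := bf_ge hi; rewrite /bf; lia.
Qed.

Lemma psize_beta : 2 * psize la + n * n.-1 = 2 * sumn (beta la).
Proof.
have e0 : sumn la = \sum_(i <- iota 0 n) l i.
  by rewrite -[in LHS](mkseq_nth 0 la) sumnE big_map.
rewrite beta_eq /psize e0 sumnE big_map.
have e1 : \sum_(i <- iota 0 n) bf i = \sum_(i <- iota 0 n) l i + \sum_(0 <= i < n) (n - i - 1).
  rewrite /index_iota subn0 -big_split /=; apply: eq_big_seq => i; rewrite mem_iota => hi.
  have := part_pos (_ : i < n); rewrite /bf; lia.
rewrite e1 mulnDr; congr (_ + _).
rewrite (big_nat_rev _ 0) /= add0n -sum_iota2.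
congr (_ * _); apply: eq_big_nat => i hi; lia.
Qed.

Lemma beta_sorted : sorted gtn (beta la).
Proof.
apply/(sortedP 0) => i hi; rewrite size_beta in hi.
rewrite !nth_beta //; last lia.
have := bf_dec (leqnSn i) hi; rewrite /gtn /=; lia.
Qed.

End Part.

Lemma beta_inj la mu : is_partition la -> is_partition mu -> beta la =i beta mu -> la = mu.
Proof.
move=> hla hmu he.
have hb := irr_sorted_eq (leT := gtn) (fun a b c h1 h2 => ltn_trans h2 h1) (fun x => ltnn x)
   (beta_sorted hla) (beta_sorted hmu) he.
have hs : size la = size mu by rewrite -(size_beta la) -(size_beta mu) hb.
apply: (eq_from_nth (x0 := 0) hs) => i hi.
have := nth_beta hla hi; rewrite hb nth_beta // -?hs //.
rewrite /bf -hs; have := part_pos hla hi; have := part_pos hmu (_ : i < size mu); lia.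
Qed.

Lemma beta_exists (b : seq nat) : sorted gtn b -> all (fun x => 0 < x) b ->
  exists la, is_partition la /\ beta la = b.
Proof.
move=> hs hpos.
set n := size b.
have hcons : forall i, i.+1 < n -> nth 0 b i.+1 < nth 0 b i.
  by move=> i hi; move/(sortedP 0): hs => /(_ i hi).
have hdec : forall i j, i <= j -> j < n -> nth 0 b j + (j - i) <= nth 0 b i.
  move=> i j; elim: j => [|j IH] hij hj; first by (have -> : i = 0 by lia); rewrite subnn addn0.
  case: (ltnP i j.+1) => h; last by (have -> : i = j.+1 by lia); rewrite subnn addn0.
  have := IH ltac:(lia) ltac:(lia); have := hcons j hj; lia.
have hposn : forall i, i < n -> 0 < nth 0 b i.
  by move=> i hi; move/allP: hpos; apply; apply: mem_nth.
have hge : forall i, i < n -> n - i <= nth 0 b i.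
  move=> i hi; have := hdec i n.-1 ltac:(lia) ltac:(lia); have := hposn n.-1 ltac:(lia); lia.
set la := [seq nth 0 b i - (n - 1 - i) | i <- iota 0 n].
have hsz : size la = n by rewrite size_map size_iota.
have hnth : forall i, i < n -> nth 0 la i = nth 0 b i - (n - 1 - i).
  by move=> i hi; rewrite (nth_map 0) ?size_iota // nth_iota.
have hpart : is_partition la.
  apply/andP; split.
    apply/(sortedP 0) => i; rewrite hsz => hi; rewrite !hnth; try lia.
    have := hcons i hi; have := hge i.+1 hi; rewrite /geq /=; lia.
  apply/allP => x /(nthP 0) [i]; rewrite hsz => hi <-; rewrite hnth //.
  have := hge i hi; lia.
exists la; split => //.
apply: (eq_from_nth (x0 := 0)); first by rewrite size_beta hsz.
move=> i; rewrite size_beta hsz => hi.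
rewrite nth_beta // /bf hsz; last by []. have e := hnth i hi. rewrite e; have := hge i hi; lia.
Qed.


Lemma count_lt_iota r h : r <= h -> count (fun i => i < r) (iota 0 h) = r.
Proof.
move=> hr; rewrite -(subnKC hr) iotaD count_cat.
rewrite (@eq_in_count _ _ predT) ?count_predT ?size_iota; last first.
  by move=> k; rewrite mem_iota => hk /=; lia.
rewrite (@eq_in_count _ _ pred0) ?count_pred0 ?addn0 //.
by move=> k; rewrite mem_iota => hk /=; lia.
Qed.

Section Conj.
Variable la : seq nat.
Hypothesis hla : is_partition la.
Local Notation l i := (nth 0 la i).

Lemma size_conj : size (conj_part la) = head 0 la.
Proof. by rewrite size_mkseq. Qed.

Lemma nth_conj i : i < head 0 la -> nth 0 (conj_part la) i = col_len la i.
Proof. by move=> hi; rewrite nth_mkseq. Qed.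

Lemma conj_partition : is_partition (conj_part la).
Proof.
apply/andP; split.
  rewrite /conj_part /mkseq; apply: (@homo_sorted _ _ _ leq geq) (iota_sorted 0 _).
  move=> x y hxy; rewrite /geq /col_len; apply: sub_count => z /=.
  exact: leq_ltn_trans.
apply/allP => x /mapP [j]; rewrite mem_iota => hj ->.
by rewrite (col_len_lt hla) nth0; lia.
Qed.

Lemma col_len_conj j : j < size la -> col_len (conj_part la) j = l j.
Proof.
move=> hj; rewrite /col_len /conj_part /mkseq count_map.
rewrite (@eq_in_count _ _ (fun i => i < l j)); last first.
  by move=> i _ /=; rewrite (col_len_lt hla).
apply: count_lt_iota; rewrite -nth0; exact: part_mono.
Qed.

Lemma hooks_conj h : h \in hooks (conj_part la) -> h \in hooks la.
Proof.
case/(mem_hooks) => i [j [hi hj ->]].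
rewrite size_conj in hi; rewrite nth_conj // in hj.
have hji : i < l j by rewrite -(col_len_lt hla).
have hjn : j < size la := leq_trans hj (col_len_le la i).
apply/mem_hooks; exists j, i; split => //.
by rewrite /hook nth_conj // col_len_conj // addnC.
Qed.

Lemma psize_conj : psize (conj_part la) = psize la.
Proof.
rewrite /psize /conj_part /mkseq sumnE big_map.
have e0 : sumn la = \sum_(k <- iota 0 (size la)) l k.
  by rewrite -[in LHS](mkseq_nth 0 la) sumnE big_map.
rewrite e0.
have e1 : forall j, col_len la j = \sum_(k <- iota 0 (size la)) (j < l k).
  by move=> j; rewrite col_len_nth -sumn_count sumnE big_map.
rewrite (eq_bigr _ (fun j _ => e1 j)) exchange_big /=.
apply: eq_big_seq => k; rewrite mem_iota => hk.
have := @count_lt_iota (l k) (head 0 la) ltac:(rewrite -nth0; exact: part_mono).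
by rewrite -sumn_count sumnE big_map.
Qed.

End Conj.


Lemma sum_eq_termwise (r : seq nat) (F G : nat -> nat) :
  (forall i, i \in r -> F i <= G i) -> \sum_(i <- r) F i = \sum_(i <- r) G i ->
  forall i, i \in r -> F i = G i.
Proof.
move=> hle heq.
have h0 : \sum_(i <- r | i \in r) (G i - F i) = 0.
  rewrite sumnB; last by move=> i; apply: hle.
  by rewrite -!big_seq heq subnn.
move: h0 => /eqP; rewrite sum_nat_seq_eq0 => /allP h i hi.
have := h i hi; rewrite /= hi /= => /eqP; have := hle i hi; lia.
Qed.

Lemma cntp_full L (p : pred nat) : (forall j, 1 <= j <= L -> p j) ->
  cntp L p = L /\ 2 * sigp L p = L * L.+1.
Proof.
elim: L => [|L IH] h; first by rewrite cntp0 sigp0.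
have [h1 h2] := IH (fun j hj => h j ltac:(lia)).
rewrite cntpS sigpS h1 (h L.+1) //; last lia.
split; first lia.
rewrite mulnDr h2; nia.
Qed.

Definition Dp (s : nat) := [pred x | (x \in Tseq s) && (2 <= x %% (s + 2))].

Lemma sum_range (F : nat -> nat) M : \sum_(m <- iota 0 M) F m = \sum_(0 <= m < M) F m.
Proof. by rewrite /index_iota subn0. Qed.

Lemma opt s X : 3 <= s -> uniq X -> {subset X <= Tseq s} ->
  (forall x t, x \in X -> t \in [:: s; s.+1; s.+2] -> t < x -> x - t \in X) ->
  2 * sumn X + size (Tseq s) * (size (Tseq s)).-1 <= 2 * sumn (Tseq s) + size X * (size X).-1 /\
  (2 * sumn X + size (Tseq s) * (size (Tseq s)).-1 = 2 * sumn (Tseq s) + size X * (size X).-1 ->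
     X =i Tseq s \/ (odd s /\ X =i Dp s)).
Proof.
move=> hs hXu hXT hdown.
have hM2 := Mlev_le hs.
set M := Mlev s in hM2 *.
have hTu := Tseq_uniq s.
have hTT : {subset Tseq s <= Tseq s} by [].
have hmemT : forall m j, m <= M -> 1 <= j <= Llev s m -> m * (s + 2) + j \in Tseq s.
  by move=> m j hm hj; apply/mem_Tseq; exists m, j; split => //; lia.
have hTfull : forall m, m <= M -> cnt s (Tseq s) m = Llev s m /\ 2 * sig s (Tseq s) m = Llev s m * (Llev s m).+1.
  move=> m hm; apply: (cntp_full (p := fun j => m * (s + 2) + j \in Tseq s)) => j hj.
  exact: hmemT.
have eNT : size (Tseq s) = \sum_(0 <= m < M.+1) Llev s m.
  rewrite (size_levels hTu hTT) sum_range; apply: eq_big_nat => m hm.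
  by case: (hTfull m ltac:(lia)).
have eST : 2 * sumn (Tseq s) = \sum_(0 <= m < M.+1)
      (2 * (m * (s + 2)) * Llev s m + Llev s m * (Llev s m).+1).
  rewrite (sumn_levels hTu hTT) sum_range big_distrr /=; apply: eq_big_nat => m hm.
  case: (hTfull m ltac:(lia)) => h1 h2; rewrite mulnDr h1 h2; lia.
set n := cnt s X.
set sg := sig s X.
have eNX : size X = \sum_(0 <= m < M.+1) n m by rewrite (size_levels hXu hXT) sum_range.
have eSX : 2 * sumn X = \sum_(0 <= m < M.+1) (2 * (m * (s + 2)) * n m + 2 * sg m).
  rewrite (sumn_levels hXu hXT) sum_range big_distrr /=; apply: eq_big_nat => m hm; rewrite /n /sg; lia.
have hrj : forall m, [/\ n m <= Llev s m,
      2 * sg m + n m * (n m).-1 <= 2 * n m * Llev s m &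
      (2 * sg m + n m * (n m).-1 = 2 * n m * Llev s m ->
       forall j, 1 <= j <= Llev s m -> (m * (s + 2) + j \in X) = (Llev s m - n m < j))].
  by move=> m; apply: (rj_bound (Llev s m) (fun j => m * (s + 2) + j \in X)).
have hfeas : forall m, 0 < m -> m <= M -> 0 < n m -> n m + 2 <= n m.-1.
  move=> m; case: m => // m' _ hm hn.
  have hL : Llev s m' = (Llev s m'.+1).+2 by rewrite /Llev; lia.
  have hpq : forall j, 1 <= j <= Llev s m'.+1 -> m'.+1 * (s + 2) + j \in X ->
     [&& m' * (s + 2) + j \in X, m' * (s + 2) + j.+1 \in X & m' * (s + 2) + j.+2 \in X].
    move=> j hj hx; rewrite mulSn in hx.
    apply/and3P; split.
    + have := hdown _ s.+2 hx ltac:(by rewrite !inE eqxx ?orbT) ltac:(lia).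
      by rewrite (_ : s + 2 + m' * (s + 2) + j - s.+2 = m' * (s + 2) + j) //; lia.
    + have := hdown _ s.+1 hx ltac:(by rewrite !inE eqxx ?orbT) ltac:(lia).
      by rewrite (_ : s + 2 + m' * (s + 2) + j - s.+1 = m' * (s + 2) + j.+1) //; lia.
    + have := hdown _ s hx ltac:(by rewrite !inE eqxx ?orbT) ltac:(lia).
      by rewrite (_ : s + 2 + m' * (s + 2) + j - s = m' * (s + 2) + j.+2) //; lia.
  have := cntp_feas hpq.
  rewrite /n /cnt /= hL -/(cntp _ _) => [[|]] //.
  by move=> h0; move: hn; rewrite /n /cnt -/(cntp _ _) h0.
have hnL : forall m, m <= M -> n m <= Llev s m by move=> m _; case: (hrj m).
have := @core_ineq s n hs hnL hfeas; rewrite -/M => -[hc1 hc2].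
set SR := \sum_(0 <= m < M.+1) (2 * (m * (s + 2)) * n m + 2 * n m * Llev s m) in hc1 hc2.
set SN := \sum_(0 <= m < M.+1) n m * (n m).-1 in hc1 hc2.
have hSXle : \sum_(0 <= m < M.+1) (2 * (m * (s + 2)) * n m + 2 * sg m + n m * (n m).-1) <= SR.
  apply: leq_sum_nat => m _; case: (hrj m) => _ h _; lia.
have eSX2 : 2 * sumn X + SN =
    \sum_(0 <= m < M.+1) (2 * (m * (s + 2)) * n m + 2 * sg m + n m * (n m).-1).
  by rewrite eSX /SN -big_split.
rewrite -eNT -eST -eNX in hc1 hc2.
split; first lia.
move=> heq.
have hSR : \sum_(0 <= m < M.+1) (2 * (m * (s + 2)) * n m + 2 * sg m + n m * (n m).-1) = SR.
  lia.
have hcore : SR + size (Tseq s) * (size (Tseq s)).-1 = 2 * sumn (Tseq s) + size X * (size X).-1 + SN.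
  lia.
have htight : forall m, m <= M -> 2 * sg m + n m * (n m).-1 = 2 * n m * Llev s m.
  move=> m hm.
  have hmi : m \in index_iota 0 M.+1 by rewrite mem_index_iota; lia.
  have hle : forall i, i \in index_iota 0 M.+1 ->
     2 * (i * (s + 2)) * n i + 2 * sg i + n i * (n i).-1 <=
     2 * (i * (s + 2)) * n i + 2 * n i * Llev s i.
    by move=> i _; case: (hrj i) => _ h _; lia.
  have := @sum_eq_termwise (index_iota 0 M.+1)
    (fun m => 2 * (m * (s + 2)) * n m + 2 * sg m + n m * (n m).-1)
    (fun m => 2 * (m * (s + 2)) * n m + 2 * n m * Llev s m) hle hSR m hmi.
  rewrite /=; lia.
have hchar : forall m j, m <= M -> 1 <= j <= Llev s m ->
    (m * (s + 2) + j \in X) = (Llev s m - n m < j).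
  by move=> m j hm hj; case: (hrj m) => _ _ /(_ (htight m hm)); apply.
have hLpos : forall m, m <= M -> 1 <= Llev s m by move=> m hm; rewrite /Llev; lia.
case: (hc2 hcore) => [hall|[ho hall]].
- left => x; apply/idP/idP => [/hXT //|].
  case/mem_Tseq => m [j [hm hj1 hj2 ->]].
  by rewrite hchar ?hall ?subnn //; apply/andP.
- right; split => // x; rewrite /Dp inE.
  apply/idP/idP => [hx|/andP [hxT hx2]].
    rewrite (hXT _ hx) /=.
    have hxT := hXT _ hx.
    case/mem_Tseq: hxT hx => m [j [hm hj1 hj2 ->]] hx.
    move: hx; rewrite hchar ?hall //; last by apply/andP.
    have := hLpos m hm; rewrite modnMDl modn_small; last by rewrite /Llev in hj2; lia.
    lia.
  move: hx2; case/mem_Tseq: hxT => m [j [hm hj1 hj2 ->]].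
  rewrite modnMDl modn_small; last by rewrite /Llev in hj2; lia.
  move=> hj; rewrite hchar ?hall //; last by apply/andP.
  have := hLpos m hm; lia.
Qed.


Definition rep s n := exists k1 k2 k3, n = k1 * s + k2 * s.+1 + k3 * s.+2.

Lemma rep_or_T s x : 3 <= s -> x = 0 \/ rep s x \/ x \in Tseq s.
Proof.
move=> hs.
set m := x %/ (s + 2); set j := x %% (s + 2).
have hxe : x = m * (s + 2) + j by rewrite /m /j -divn_eq.
have hj : j < s + 2 by rewrite /j ltn_mod; lia.
case: (posnP j) => hj0.
  by right; left; exists 0, 0, m; rewrite hxe hj0; lia.
case: (leqP s (2 * m + j)) => hsj.
  right; left.
  set r := 2 * m + j - s.
  exists (m.+1 - r %/ 2 - r %% 2), (r %% 2), (r %/ 2).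
  have hr : r = 2 * (r %/ 2) + r %% 2 by lia.
  have he : r %% 2 <= 1 by lia.
  have hq : r %/ 2 + r %% 2 <= m.+1 by rewrite /r; lia.
  move: hr he hq; set q := r %/ 2; set e := r %% 2 => hr he hq.
  have -> : m.+1 - q - e = m.+1 - (q + e) by lia.
  rewrite mulnBl hxe; move: hr; rewrite /r; nia.
right; right; apply/mem_Tseq; exists m, j; rewrite /Mlev /Llev; split => //; lia.
Qed.

Lemma rep_add s a b : rep s a -> rep s b -> rep s (a + b).
Proof.
move=> [a1 [a2 [a3 ->]]] [b1 [b2 [b3 ->]]]; exists (a1 + b1), (a2 + b2), (a3 + b3); lia.
Qed.

Lemma rep_mul s t k : t \in [:: s; s.+1; s.+2] -> rep s (k * t).
Proof.
rewrite !inE => /or3P [] /eqP ->.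
- by exists k, 0, 0; lia.
- by exists 0, k, 0; lia.
- by exists 0, 0, k; lia.
Qed.

Lemma nodiv s b c t : 3 <= s -> in_T s b -> c < b -> c \notin Tseq s ->
  t \in [:: s; s.+1; s.+2] -> ~~ (t %| b - c).
Proof.
move=> hs [hb hnb] hcb hc ht; apply/negP => /dvdnP [k hk].
have hbe : b = c + k * t by lia.
case: (rep_or_T c hs) => [c0|[hrc|hcT]].
- by apply: hnb; rewrite hbe c0 add0n; apply: rep_mul.
- by apply: hnb; rewrite hbe; apply: rep_add => //; apply: rep_mul.
- by rewrite hcT in hc.
Qed.

Section Core.
Variables (s : nat) (mu : seq nat).
Hypotheses (hs : 3 <= s) (hmu : is_core3 s mu).

Lemma core_part : is_partition mu.
Proof. by case/andP: hmu. Qed.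

Lemma core_hook t : t \in [:: s; s.+1; s.+2] -> t \notin hooks mu.
Proof.
move=> ht; apply/negP => hh.
case/andP: hmu => _ /allP /(_ t hh) /andP [/andP [h1 h2] h3].
move: ht; rewrite !inE => /or3P [] /eqP he; rewrite he dvdnn in h1 h2 h3 => //.
Qed.

Lemma core_beta_down b t : b \in beta mu -> t \in [:: s; s.+1; s.+2] -> t < b ->
  b - t \in beta mu.
Proof.
move=> hb ht htb; apply/negPn/negP => hn.
have hp := core_part.
case/(mem_betaP hp): hb => i hi hbe.
have hti : 0 < t by move: ht; rewrite !inE => /or3P [] /eqP ->; lia.
have := gap_hook hp hi (_ : b - t < bf mu i) (_ : b - t \notin beta mu).
rewrite -hbe (_ : b - (b - t) = t); last lia.
move=> /(_ ltac:(lia) hn) hh.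
by move: (core_hook ht); rewrite hh.
Qed.

Lemma core_beta_T b : b \in beta mu -> in_T s b.
Proof.
have hp := core_part.
elim/ltn_ind: b => b IH hb.
have hb0 := beta_pos hp hb.
split => // [[k1 [k2 [k3 he]]]].
have step : forall t, t \in [:: s; s.+1; s.+2] -> t <= b -> rep s (b - t) -> False.
  move=> t ht htb hr.
  have hti : 0 < t by move: ht; rewrite !inE => /or3P [] /eqP ->; lia.
  case hin : (b - t \in beta mu).
  - have [_ hnr] := IH (b - t) ltac:(lia) hin.
    exact: hnr hr.
  - case/(mem_betaP hp): hb => i hi hbe.
    have := gap_hook hp hi (_ : b - t < bf mu i) (negbT hin).
    rewrite -hbe (_ : b - (b - t) = t); last lia.
    move=> /(_ ltac:(lia)) hh.
    by move: (core_hook ht); rewrite hh.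
case: (posnP k1) => h1.
  case: (posnP k2) => h2.
    case: (posnP k3) => h3; first by move: he hb0; rewrite h1 h2 h3; lia.
    apply: (step s.+2); first by rewrite !inE eqxx ?orbT.
      by rewrite he; nia.
    exists k1, k2, k3.-1; rewrite he; case: k3 h3 {he} => // k3 _; rewrite mulSn; lia.
  apply: (step s.+1); first by rewrite !inE eqxx ?orbT.
    by rewrite he; nia.
  exists k1, k2.-1, k3; rewrite he; case: k2 h2 {he} => // k2 _; rewrite mulSn; lia.
apply: (step s); first by rewrite !inE eqxx ?orbT.
  by rewrite he; nia.
exists k1.-1, k2, k3; rewrite he; case: k1 h1 {he} => // k1 _; rewrite mulSn; lia.
Qed.

End Core.


Lemma size_Tseq s : 3 <= s -> size (Tseq s) = (Mlev s).+1 * (s - (Mlev s).+1).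
Proof.
move=> hs; have hM := Mlev_le hs.
rewrite (size_levels (Tseq_uniq s) (fun x h => h)) sum_range -sumL //.
apply: eq_big_nat => m hm.
have := @cntp_full (Llev s m) (fun j => m * (s + 2) + j \in Tseq s).
case => // j hj; apply/mem_Tseq; exists m, j; split => //; lia.
Qed.

Lemma Tseq_max s x : x \in Tseq s -> x <= Mlev s * (s + 2) + Llev s (Mlev s).
Proof.
case/mem_Tseq => m [j [hm hj1 hj2 ->]].
case: (ltnP m (Mlev s)) => h.
  have : m.+1 * (s + 2) <= Mlev s * (s + 2) by rewrite leq_mul2r h orbT.
  rewrite mulSn; rewrite /Llev in hj2 *; lia.
have e : m = Mlev s by lia.
rewrite e in hj2 *; lia.
Qed.

Lemma Tseq_max_mem s : 3 <= s -> Mlev s * (s + 2) + Llev s (Mlev s) \in Tseq s.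
Proof.
move=> hs; have := Mlev_le hs => hM.
apply/mem_Tseq; exists (Mlev s), (Llev s (Mlev s)); split => //; rewrite /Llev; lia.
Qed.

Unset Implicit Arguments.

Theorem theorem3p4 (s : nat) (hs : 3 <= s) :
  (exists ka : seq nat, is_partition ka /\ forall n, n \in beta ka <-> in_T s n) /\
  (forall ka : seq nat, is_partition ka -> (forall n, n \in beta ka <-> in_T s n) ->
    [/\ is_core3 s ka,
        (forall mu, is_core3 s mu -> psize mu <= psize ka),
        (~~ odd s ->
           conj_part ka = ka /\
           (forall mu, is_core3 s mu -> psize mu = psize ka -> mu = ka))
      & (odd s ->
           conj_part ka <> ka /\
           (forall mu, is_core3 s mu ->
              (psize mu = psize ka <-> mu = ka \/ mu = conj_part ka)))]).
Proof.
split.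
  set b := sort geq (undup (Tseq s)).
  have hbs : sorted gtn b.
    rewrite gtn_sorted_uniq_geq sort_uniq undup_uniq /=.
    by apply: sort_sorted => x y; rewrite /geq /= orbC leq_total.
  have hmem : forall x, (x \in b) = (x \in Tseq s) by move=> x; rewrite mem_sort mem_undup.
  have hbp : all (fun x => 0 < x) b.
    by apply/allP => x; rewrite hmem => /(in_T_Tseq x hs) [].
  have [la [hla hbe]] := beta_exists hbs hbp.
  exists la; split => // x; rewrite hbe hmem (in_T_Tseq x hs); done.
move=> ka hka hbeta.
have hbT : beta ka =i Tseq s by move=> x; apply/idP/idP => h;
  [apply/(in_T_Tseq x hs); apply/hbeta | apply/hbeta; apply/(in_T_Tseq x hs)].
have hperm : perm_eq (beta ka) (Tseq s).
  apply: uniq_perm => //; last exact: Tseq_uniq.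
  exact: sorted_uniq (fun a b c h1 h2 => ltn_trans h2 h1) (fun x => ltnn x) _ (beta_sorted hka).
have hsz : size (beta ka) = size (Tseq s) := perm_size hperm.
have hsum : sumn (beta ka) = sumn (Tseq s) := perm_sumn hperm.
have hpska : 2 * psize ka + size (Tseq s) * (size (Tseq s)).-1 = 2 * sumn (Tseq s).
  by rewrite -hsz -hsum size_beta // psize_beta.
have hmax : forall mu, is_core3 s mu -> psize mu <= psize ka /\
    (psize mu = psize ka -> beta mu =i Tseq s \/ (odd s /\ beta mu =i Dp s)).
  move=> mu hmu.
  have hp := core_part hmu.
  have hXu : uniq (beta mu).
    exact: sorted_uniq (fun a b c h1 h2 => ltn_trans h2 h1) (fun x => ltnn x) _ (beta_sorted hp).
  have hXT : {subset beta mu <= Tseq s}.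
    by move=> x hx; apply/(in_T_Tseq x hs); apply: (core_beta_T hs hmu).
  have hdown : forall x t, x \in beta mu -> t \in [:: s; s.+1; s.+2] -> t < x -> x - t \in beta mu.
    by move=> x t hx ht htx; apply: (core_beta_down hs hmu).
  have [o1 o2] := opt hs hXu hXT hdown.
  have hpsmu := psize_beta hp; rewrite -(size_beta mu) in hpsmu.
  move: o1 o2 hpsmu hpska.
  move: (size (beta mu) * (size (beta mu)).-1) (size (Tseq s) * (size (Tseq s)).-1) => A B.
  move=> o1 o2 hpsmu hpska.
  split; first by lia.
  by move=> he; apply: o2; lia.
have hcka : is_core3 s ka.
  apply/andP; split => //; apply/allP => h hh.
  have [i [c [hi hc hcn he]]] := hook_gap hka hh.
  have hbi : bf ka i \in beta ka by apply/(mem_betaP hka); exists i.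
  have hTb : in_T s (bf ka i) by apply/hbeta.
  have hcT : c \notin Tseq s by rewrite -hbT.
  have hn := fun t ht => @nodiv s (bf ka i) c t hs hTb hc hcT ht.
  rewrite he (hn s) ?(hn s.+1) ?(hn s.+2) //; by rewrite !inE eqxx ?orbT.
have hconj_core : is_core3 s (conj_part ka).
  apply/andP; split; first exact: conj_partition.
  apply/allP => h hh; have := hooks_conj hka hh.
  by case/andP: hcka => _ /allP; apply.
have hpsc : psize (conj_part ka) = psize ka := psize_conj hka.
have huniqT : forall mu, is_partition mu -> beta mu =i Tseq s -> mu = ka.
  move=> mu hp he; apply: beta_inj => // x; by rewrite he hbT.
split => //.
- by move=> mu hmu; case: (hmax mu hmu).
- move=> hev.
  have hu : forall mu, is_core3 s mu -> psize mu = psize ka -> mu = ka.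
    move=> mu hmu he; case: (hmax mu hmu) => _ /(_ he) [h|[ho _]].
      exact: huniqT (core_part hmu) h.
    by rewrite ho in hev.
  split; last exact: hu.
  exact: hu.
- move=> hodd.
  have hnsc : conj_part ka <> ka.
    move=> hc.
    have hs1 : size ka = head 0 ka by rewrite -{1}hc size_conj.
    have hn := hsz; rewrite size_beta // in hn.
    have hM := Mlev_s hs; rewrite hodd /= in hM.
    have hTs := size_Tseq hs.
    set M := Mlev s in hM hTs.
    have hn0 : 0 < size ka by rewrite hn hTs; lia.
    have hb0 : bf ka 0 = M * (s + 2) + Llev s M.
      apply/eqP; rewrite eqn_leq; apply/andP; split.
        apply: Tseq_max; rewrite -hbT; apply/(mem_betaP hka); by exists 0.
      have : M * (s + 2) + Llev s M \in beta ka by rewrite hbT; exact: Tseq_max_mem.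
      case/(mem_betaP hka) => i hi ->.
      by have := bf_dec hka (leq0n i) hi; lia.
    move: hb0; rewrite /bf nth0 -hs1 hn hTs /Llev subn0.
    nia.
  split => // mu hmu; split.
  + move=> he; case: (hmax mu hmu) => _ /(_ he) [h|[_ hD]].
      by left; exact: huniqT (core_part hmu) h.
    right.
    case: (hmax _ hconj_core) => _ /(_ hpsc) [h|[_ hD']].
      by have := huniqT _ (conj_partition hka) h.
    apply: beta_inj (core_part hmu) (conj_partition hka) _ => x.
    by rewrite hD hD'.
  + by case => ->.
Qed.
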